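(* Let $G = K \rtimes_\varphi \langle t\rangle$ be a finitely generated group, where $K$ is abelian, $\langle t\rangle$ is infinite cyclic and $\varphi\in\mathrm{Aut}(K)$. Let $R$ be a finite symmetric subset of $K$ such that $S=R\cup\{t^{\pm1}\}$ generates $G$. Then for every $g=(x,t^m)\in G$ with $m\ge0$ there is a word $w\in W'$ that is a geodesic and represents $g$.
   Context: $K$ is written additively and elements of $G$ are pairs $(x,t^m)$ with $(x,t^m)(x',t^{m'})=(x+\varphi^m(x'),t^{m+m'})$; $m$ is the $t$-exponent sum of $(x,t^m)$. $W(R)$ denotes the set of words in the alphabet $R$. The length of a word is the length of its free reduction; a word is a geodesic if its length equals the word length (w.r.t. $S$) of the element it represents. $W'$ is the set of geodesic words of the form $t^{-p}u_0\,t\,u_1\,t\cdots u_{d-1}\,t\,u_d\,t^{-q}t^{m}$ with integers $p,q,m\ge0$, $d=p+q$ and $u_0,\dots,u_d\in W(R)$. *)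

(* Defs.v *)
From HB Require Import structures.
From mathcomp Require Import all_boot all_order all_algebra.
Set Implicit Arguments. Unset Strict Implicit. Unset Printing Implicit Defensive.
Import Order.TTheory GRing.Theory Num.Theory.
Local Open Scope ring_scope.

(* Semidirect product G = K x|_phi <t>: elements are pairs (x, m) : K * int,
   standing for (x, t^m). phi is an additive bijection of K with inverse phiinv. *)

Section SemiDirect.
Variable K : zmodType.
Variables (phi phiinv : K -> K).

Definition phipow (m : int) (x : K) : K :=
  match m with
  | Posz n => iter n phi x
  | Negz n => iter n.+1 phiinv x
  end.

Definition mulG (g h : K * int) : K * int :=
  (g.1 + phipow g.2 h.1, g.2 + h.2)%R.

(* Letters of the alphabet S = R u {t, t^-1}:
   inl r  is the letter r in R,  inr true is t,  inr false is t^-1. *)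
Definition letter := (K + bool)%type.

Definition letter_val (a : letter) : K * int :=
  match a with
  | inl r => (r, 0%R)
  | inr true => (0%R, 1%R)
  | inr false => (0%R, (-1)%R)
  end.

Definition evalw (w : seq letter) : K * int :=
  foldr (fun a g => mulG (letter_val a) g) (0%R, 0%R) w.

Definition letter_inv (a : letter) : letter :=
  match a with
  | inl r => inl (- r)
  | inr b => inr (~~ b)
  end.

Definition freered (w : seq letter) : seq letter :=
  foldr (fun a acc =>
           match acc with
           | b :: acc' => if b == letter_inv a then acc' else a :: acc
           | [::] => [:: a]
           end) [::] w.

Definition wlength (w : seq letter) : nat := size (freered w).

Definition overS (R : seq K) (w : seq letter) : Prop :=
  forall a, a \in w -> match a with inl r => r \in R | inr _ => true end.

Definition geodesic (R : seq K) (w : seq letter) : Prop :=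
  overS R w /\
  (exists w0, [/\ overS R w0, evalw w0 = evalw w & size w0 = wlength w]) /\
  (forall w', overS R w' -> evalw w' = evalw w -> wlength w <= size w')%N.

Definition Rword (u : seq K) : seq letter := map inl u.

Definition interleave (us : seq (seq K)) : seq letter :=
  match us with
  | [::] => [::]
  | u0 :: rest => Rword u0 ++ flatten [seq inr true :: Rword u | u <- rest]
  end.

Definition inWprime (R : seq K) (w : seq letter) : Prop :=
  geodesic R w /\
  exists (p q m : nat) (us : seq (seq K)),
    [/\ size us = (p + q).+1,
        (forall u, u \in us -> forall r, r \in u -> r \in R) &
        w = nseq p (inr false) ++ interleave us ++ nseq q (inr false)
              ++ nseq m (inr true)].

End SemiDirect.

(* Main.v *)
Require Import Defs.
From HB Require Import structures.
From mathcomp Require Import all_boot all_order all_algebra.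
From mathcomp Require Import zify.
From Stdlib Require Import Classical.
Import Order.TTheory GRing.Theory Num.Theory.
Set Implicit Arguments. Unset Strict Implicit.
Local Open Scope ring_scope.

Lemma phiinv_add (K : zmodType) (phi : {additive K -> K}) (phiinv : K -> K)
  (phiK : cancel phi phiinv) (phiinvK : cancel phiinv phi) (a b : K) :
  phiinv (a + b) = phiinv a + phiinv b.
Proof. by rewrite -{1}(phiinvK a) -{1}(phiinvK b) -raddfD phiK. Qed.

Lemma phipow_S (K : zmodType) (phi : {additive K -> K}) (phiinv : K -> K)
  (phiK : cancel phi phiinv) (phiinvK : cancel phiinv phi) (s : int) (r : K) :
  phipow phi phiinv (1 + s) r = phi (phipow phi phiinv s r).
Proof.
case: s => [n|n].
  by have -> : (1 + Posz n = Posz n.+1)%R by lia.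
case: n => [|n].
  by have -> : (1 + Negz 0 = Posz 0)%R by []; rewrite /= phiinvK.
have -> : (1 + Negz n.+1 = Negz n)%R by rewrite !NegzE; lia.
by rewrite /= phiinvK.
Qed.

Lemma phipow_P (K : zmodType) (phi : {additive K -> K}) (phiinv : K -> K)
  (phiK : cancel phi phiinv) (phiinvK : cancel phiinv phi) (s : int) (r : K) :
  phipow phi phiinv (-1 + s) r = phiinv (phipow phi phiinv s r).
Proof.
case: s => [n|n].
  case: n => [|n]; first by have -> : (-1 + Posz 0 = Negz 0)%R by [].
  have -> : (-1 + Posz n.+1 = Posz n)%R by lia.
by rewrite /= phiK.
have -> : (-1 + Negz n = Negz n.+1)%R by rewrite !NegzE; lia.
by [].
Qed.

Lemma cancel_letter (K : zmodType) (phi : {additive K -> K}) (phiinv : K -> K)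
  (phiK : cancel phi phiinv) (phiinvK : cancel phiinv phi) (a : letter K) g :
  mulG phi phiinv (letter_val a) (mulG phi phiinv (letter_val (letter_inv a)) g) = g.
Proof.
case: g => g1 g2; case: a => [r|[]]; rewrite /mulG /=.
- by rewrite !add0r addNKr.
- by rewrite !add0r phiinvK addNKr.
- by rewrite !add0r phiK addKr.
Qed.

Lemma evalw_mid (K : zmodType) (phi : {additive K -> K}) (phiinv : K -> K)
  (phiK : cancel phi phiinv) (phiinvK : cancel phiinv phi) X a Y :
  evalw phi phiinv (X ++ a :: letter_inv a :: Y) = evalw phi phiinv (X ++ Y).
Proof.
elim: X => [|b X IH] /=; first exact: (cancel_letter phiK phiinvK).
by rewrite IH.
Qed.

Lemma exp_cat (K : zmodType) (phi : {additive K -> K}) (phiinv : K -> K) (A Y : seq (letter K)) :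
  (evalw phi phiinv (A ++ Y)).2 = (evalw phi phiinv A).2 + (evalw phi phiinv Y).2.
Proof.
elim: A => [|a A IH] /=; first by rewrite add0r.
by rewrite IH addrA.
Qed.

Lemma insert_r (K : zmodType) (phi : {additive K -> K}) (phiinv : K -> K)
  (phiK : cancel phi phiinv) (phiinvK : cancel phiinv phi) A r Y :
  evalw phi phiinv (A ++ inl r :: Y) =
  ((evalw phi phiinv (A ++ Y)).1 + phipow phi phiinv (evalw phi phiinv A).2 r,
   (evalw phi phiinv (A ++ Y)).2).
Proof.
elim: A => [|a A IH] /=.
  by rewrite /mulG /= add0r addrC.
rewrite IH /mulG /=; congr (_, _).
case: a => [s|[]] /=.
- by rewrite add0r addrA.
- by rewrite raddfD addrA (phipow_S phiK phiinvK).
- by rewrite (phiinv_add phiK phiinvK) addrA (phipow_P phiK phiinvK).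
Qed.

Definition fstep (K : zmodType) (a : letter K) (acc : seq (letter K)) :=
  match acc with
  | b :: acc' => if b == letter_inv a then acc' else a :: acc
  | [::] => [:: a]
  end.

Lemma freered_foldr (K : zmodType) (w : seq (letter K)) : freered w = foldr (@fstep K) [::] w.
Proof. by []. Qed.

Lemma size_fstep_foldr (K : zmodType) (A acc : seq (letter K)) :
  (size (foldr (@fstep K) acc A) <= size A + size acc)%N.
Proof.
elim: A => [|a A IH] //=.
rewrite /fstep; case: (foldr _ acc A) IH => [|b l] /= IH; first by lia.
case: ifP => _ /=; lia.
Qed.

Lemma size_freered_cat (K : zmodType) (A B : seq (letter K)) :
  (wlength (A ++ B) <= size A + wlength B)%N.
Proof. by rewrite /wlength !freered_foldr foldr_cat size_fstep_foldr. Qed.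

Lemma freered_evalw (K : zmodType) (phi : {additive K -> K}) (phiinv : K -> K)
  (phiK : cancel phi phiinv) (phiinvK : cancel phiinv phi) w :
  evalw phi phiinv (freered w) = evalw phi phiinv w.
Proof.
elim: w => [|a w IH] //.
rewrite freered_foldr /= -freered_foldr.
move: IH; case: (freered w) => [|b l] /= IH; first by rewrite -IH.
case: eqP => [Hb|_] /=; last by rewrite IH.
by rewrite -IH Hb /= (cancel_letter phiK phiinvK).
Qed.

Lemma freered_sub (K : zmodType) (w : seq (letter K)) x : x \in freered w -> x \in w.
Proof.
elim: w => [|a w IH] //.
rewrite freered_foldr /= -freered_foldr.
move: IH; case: (freered w) => [|b l] /= IH.
  by rewrite !inE => H; rewrite H.
case: ifP => _ Hx.
  by rewrite inE IH ?orbT // inE Hx orbT.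
move: Hx; rewrite inE => /orP [H|Hx]; first by rewrite inE H.
by rewrite inE IH ?orbT.
Qed.

Lemma freered_nseqt (K : zmodType) (k m : nat) :
  freered (nseq k (inr false : letter K) ++ nseq m (inr true)) =
  if (k <= m)%N then nseq (m - k) (inr true) else nseq (k - m) (inr false).
Proof.
elim: k => [|k IH] /=.
  rewrite subn0; elim: m => [|m IHm] //=.
  by rewrite freered_foldr /= -freered_foldr IHm; case: m {IHm}.
rewrite freered_foldr /= -freered_foldr IH.
case: (ltngtP k m) => H.
- rewrite (_ : (m - k = (m - k.+1).+1)%N); last by lia.
  by [].
- rewrite (_ : (k - m = (k - m).-1.+1)%N); last by lia.
  by rewrite (_ : (k.+1 - m = (k - m).-1.+2)%N); last by lia.
- by subst; rewrite subnn subSnn.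
Qed.

Definition flat (K : zmodType) (us : seq (seq K)) : seq (letter K) :=
  flatten [seq inr true :: Rword u | u <- us].

Definition FW (K : zmodType) (p : nat) (us : seq (seq K)) (e : nat) : seq (letter K) :=
  nseq p.+1 (inr false) ++ flat us ++ nseq e (inr false).

Lemma exp_nseqF (K : zmodType) (phi : {additive K -> K}) (phiinv : K -> K) k :
  (evalw phi phiinv (nseq k (inr false : letter K))).2 = - k%:Z.
Proof. elim: k => [|k IH] //=; rewrite IH; lia. Qed.

Lemma exp_Rword (K : zmodType) (phi : {additive K -> K}) (phiinv : K -> K) (u : seq K) :
  (evalw phi phiinv (Rword u)).2 = 0.
Proof. by elim: u => [|r u IH] //=; rewrite IH. Qed.

Lemma exp_flat (K : zmodType) (phi : {additive K -> K}) (phiinv : K -> K) (us : seq (seq K)) :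
  (evalw phi phiinv (flat us)).2 = (size us)%:Z.
Proof.
elim: us => [|u us IH] //=.
rewrite /flat /= -/(flat us) exp_cat exp_Rword IH; lia.
Qed.

Lemma evalw_cons (K : zmodType) (phi : {additive K -> K}) (phiinv : K -> K) a w :
  evalw phi phiinv (a :: w) = mulG phi phiinv (letter_val a) (evalw phi phiinv w).
Proof. by []. Qed.

Definition allR (K : zmodType) (R : seq K) (us : seq (seq K)) :=
  forall u, u \in us -> forall r, r \in u -> r \in R.

Lemma NF_exists (K : zmodType) (phi : {additive K -> K}) (phiinv : K -> K)
  (phiK : cancel phi phiinv) (phiinvK : cancel phiinv phi) (R : seq K) v :
  overS R v -> exists p d e (us : seq (seq K)),
   [/\ size us = d.+1, (p <= d)%N, (e <= d)%N & allR R us] /\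
      [/\ evalw phi phiinv (FW p us e) = evalw phi phiinv v,
       (evalw phi phiinv v).2 = d%:Z - p%:Z - e%:Z &
       (size (FW p us e) <= size v + 2 + 2 * (p + e - d))%N].
Proof.
elim: v => [|a v IH] HS.
  exists 0%N, 0%N, 0%N, [:: [::]]; split; split => //.
  - by move=> u; rewrite inE => /eqP -> r.
  - by rewrite /FW /= (cancel_letter phiK phiinvK (inr false)).
have HSv : overS R v by move=> b Hb; apply: HS; rewrite inE Hb orbT.
have Ha := HS a (mem_head a v).
have [p [d [e [us [[Hsz Hpd Hed HR] [HE Hh Hs]]]]]] := IH HSv.
have Hexp : (evalw phi phiinv (a :: v)).2 = (letter_val a).2 + (evalw phi phiinv v).2 by [].
clear HS; case: a Ha Hexp => [r|[]] Ha Hexp.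
-
  set u0 := nth [::] us p.
  have Hp : (p < size us)%N by lia.
  have Hus : us = take p us ++ u0 :: drop p.+1 us by rewrite -drop_nth ?cat_take_drop.
  set A := nseq p.+1 (inr false) ++ flat (take p us) ++ [:: inr true].
  set Y := flat (drop p.+1 us) ++ nseq e (inr false).
  have HF : forall u1, FW p (take p us ++ u1 :: drop p.+1 us) e = A ++ Rword u1 ++ Y.
    move=> u1; rewrite /FW /flat map_cat flatten_cat /A /Y -!catA /=.
    by [].

  have HA : (evalw phi phiinv A).2 = 0.
    rewrite !exp_cat exp_nseqF exp_flat size_take Hp /=; lia.
  exists p, d, e, (take p us ++ (r :: u0) :: drop p.+1 us); split; split => //.
  + rewrite size_cat /= size_take Hp size_drop; lia.
  + move=> u; rewrite mem_cat inE => /orP [Hu|/orP [/eqP ->|Hu]].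
    * by apply: HR; apply: mem_take Hu.
    * move=> s; rewrite inE => /orP [/eqP ->//|]; apply: HR; exact: mem_nth.
    * by apply: HR; apply: mem_drop Hu.
  + rewrite HF (insert_r phiK phiinvK) HA -HF -Hus HE /= /mulG /=.
    by rewrite addrC add0r.
  + by rewrite Hexp Hh /= add0r.
  + move: Hs; rewrite HF {1}Hus HF !size_cat /=; lia.
-
  case: p Hpd HE Hh Hs => [|p'] Hpd HE Hh Hs.
  + exists 0%N, d.+1, e, ([::] :: us); split; split => //.
    * by rewrite /= Hsz.
    * by lia.
    * move=> u; rewrite inE => /orP [/eqP -> //|]; exact: HR.
    * rewrite /= -HE /FW /=.
      by rewrite (cancel_letter phiK phiinvK (inr true)) (cancel_letter phiK phiinvK (inr false)).
    * rewrite Hexp Hh /=; lia.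
    * move: Hs; rewrite /FW (_ : flat ([::] :: us) = inr true :: flat us) // !size_cat /= !size_nseq; lia.
  + exists p', d, e, us; split; split => //.
    * by lia.
    * by rewrite /= -HE /FW /= (cancel_letter phiK phiinvK (inr true)).
    * rewrite Hexp Hh /=; lia.
    * move: Hs; rewrite /FW !size_cat /= !size_nseq; lia.
-
  case: (ltngtP p d) => Hpd'; last first.
  + subst p.
    exists d.+1, d.+1, e.+1, (rcons us [::]); split; split => //.
    * by rewrite size_rcons Hsz.
    * move=> u; rewrite mem_rcons inE => /orP [/eqP -> //|]; exact: HR.
    * have -> : FW d.+1 (rcons us [::]) e.+1 = inr false :: ((nseq d.+1 (inr false) ++ flat us) ++ inr true :: letter_inv (inr true) :: nseq e (inr false)).
        by rewrite /FW /flat map_rcons flatten_rcons -/(flat us) /= -!catA.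
      by rewrite !evalw_cons (evalw_mid phiK phiinvK) -HE -catA.
    * rewrite Hexp Hh /=; lia.
    * move: Hs; rewrite /FW /flat map_rcons flatten_rcons -/(flat us) !size_cat /= !size_nseq; lia.
  + lia.
  + exists p.+1, d, e, us; split; split => //.
    * by rewrite evalw_cons -HE.
    * rewrite Hexp Hh /=; lia.
    * move: Hs; rewrite /FW !size_cat /= !size_nseq; lia.
Qed.

Lemma min_word (T : Type) (P : seq T -> Prop) :
  (exists w, P w) -> exists v, P v /\ forall w, P w -> (size v <= size w)%N.
Proof.
move=> [w Pw].
suff: forall n w, (size w <= n)%N -> P w -> exists v, P v /\ forall w, P w -> (size v <= size w)%N.
  by move/(_ (size w) w (leqnn _) Pw).
elim=> [|n IH] w' Hs Pw'.
  exists w'; split => // w'' _; lia.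
case: (classic (exists w'', P w'' /\ (size w'' < size w')%N)) => [[w'' [P'' Hlt]]|Hno].
  apply: (IH w'') => //; lia.
exists w'; split => // w'' P''.
rewrite leqNgt; apply/negP => Hlt; apply: Hno; by exists w''.
Qed.

Lemma nseqS_cat (T : Type) (x : T) p Z : nseq p.+1 x ++ Z = nseq p x ++ x :: Z.
Proof. by elim: p => //= p ->. Qed.

Lemma evalw_catE (K : zmodType) (phi : {additive K -> K}) (phiinv : K -> K) X Y Y' :
  evalw phi phiinv Y = evalw phi phiinv Y' ->
  evalw phi phiinv (X ++ Y) = evalw phi phiinv (X ++ Y').
Proof. by rewrite /evalw !foldr_cat => ->. Qed.

Lemma overS_flat (K : zmodType) (R : seq K) us : allR R us -> overS R (flat us).
Proof.
elim: us => [|u us IH] HR a //.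
rewrite /flat /= -/(flat us) inE mem_cat => /orP [/eqP -> //|/orP [Ha|Ha]].
  case/mapP: Ha => r Hr ->; apply: (HR u) => //; exact: mem_head.
apply: IH Ha => u' Hu'; apply: HR; by rewrite inE Hu' orbT.
Qed.

Lemma overS_cat (K : zmodType) (R : seq K) A B :
  overS R A -> overS R B -> overS R (A ++ B).
Proof. by move=> HA HB a; rewrite mem_cat => /orP [/HA|/HB]. Qed.

Lemma overS_nseq (K : zmodType) (R : seq K) n b : overS R (nseq n (inr b)).
Proof. by move=> a; rewrite mem_nseq => /andP [_ /eqP ->]. Qed.

Theorem lemma2p1 (K : zmodType) (phi : {additive K -> K}) (phiinv : K -> K)
  (phiK : cancel phi phiinv) (phiinvK : cancel phiinv phi)
  (R : seq K) (Rsym : forall r, r \in R -> - r \in R)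
  (Sgen : forall g : K * int, exists w, overS R w /\ evalw phi phiinv w = g)
  (x : K) (m : nat) :
  exists w, inWprime phi phiinv R w /\ evalw phi phiinv w = (x, m%:Z).
Proof.
have [v [[HSv HEv] Hmin]] := min_word (Sgen (x, m%:Z)).
have [p [d [e [us [[Hsz Hpd Hed HR] [HE Hh Hs]]]]]] := NF_exists phiK phiinvK HSv.
rewrite HEv /= in Hh.
have Hpe : (p + e <= d)%N by lia.
have He : e = (d - p - m)%N by lia.
set q := (d - p)%N.
have Hqd : q = (d - p)%N by [].
clearbody q.
case: us Hsz HR HE Hs => [//|u0 rest] Hsz HR HE Hs.
set X := nseq p (inr false : letter K) ++ interleave (u0 :: rest).
have Hfl : flat (u0 :: rest) = inr true :: (Rword u0 ++ flat rest) by [].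
have HFW : evalw phi phiinv (FW p (u0 :: rest) e) = evalw phi phiinv (X ++ nseq e (inr false)).
  rewrite /FW /X nseqS_cat.
  rewrite Hfl cat_cons (evalw_mid phiK phiinvK (nseq p _) (inr false)).
  by rewrite /interleave -/(flat rest) -!catA.
have HsFW : size (FW p (u0 :: rest) e) = (size (X ++ nseq e (inr false : letter K))).+2.
  rewrite /FW /X Hfl /interleave -/(flat rest) !size_cat /= !size_cat !size_nseq; lia.
have Hq : evalw phi phiinv (nseq q (inr false : letter K) ++ nseq m (inr true)) =
          evalw phi phiinv (nseq e (inr false : letter K)).
  rewrite -(freered_evalw phiK phiinvK) freered_nseqt.
  case: ifP => H.
    have -> : (m - q = 0)%N by lia.
    by have -> : e = 0%N by lia.
  by have -> : (q - m = e)%N by lia.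
set W := X ++ nseq q (inr false) ++ nseq m (inr true).
have HEW : evalw phi phiinv W = (x, m%:Z) by rewrite /W (evalw_catE X Hq) -HFW HE.
have HwW : (wlength W <= size v)%N.
  apply: leq_trans (size_freered_cat _ _) _.
  rewrite /wlength freered_nseqt.
  move: Hs HsFW; rewrite size_cat size_nseq => Hs HsFW.
  case: ifP => H; rewrite size_nseq; lia.
have HSI : overS R (interleave (u0 :: rest)).
  move=> a Ha; apply: (overS_flat HR); rewrite Hfl inE; apply/orP; right; exact: Ha.
have HSW : overS R W.
  rewrite /W /X; apply: overS_cat; first (apply: overS_cat => //; apply: overS_nseq).
  by apply: overS_cat; apply: overS_nseq.
exists W; split => //; split.
  split => //; split.
    exists (freered W); split => //.
      by move=> a /freered_sub; apply: HSW.
    exact: (freered_evalw phiK phiinvK).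
  move=> w' HSw' HEw'; apply: leq_trans HwW _; apply: Hmin; split => //.
  by rewrite HEw'.
exists p, q, m, (u0 :: rest); split => //.
by rewrite Hsz; congr S; lia.
by rewrite /W /X -catA.
Qed.
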